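(* Let $r$ be a positive integer and $n\ge0$. Each of the following sets is a basis of $\mathrm{NCQSym}^r_n(\mathbf{x})$: (1) $\{\mathbf{M}_{(\Phi,\Pi)}:(\Phi,\Pi)\text{ an } r\text{-set-composition of }[n]\}$; (2) $\{\overline{\mathbf{F}}_{(\Phi,\Pi)}:(\Phi,\Pi)\text{ an } r\text{-set-composition of }[n]\}$.
   Context: Noncommuting variables $\mathbf{x}_1,\mathbf{x}_2,\dots$. A set composition $\Phi=(\Phi_1|\cdots|\Phi_k)$ of a finite set is an ordered list of disjoint nonempty blocks with that union; a set partition $\Pi=\Pi_1/\cdots/\Pi_l$ an unordered one. An $r$-set-composition of $[n]$ is a pair $(\Phi,\Pi)$ with $\Phi$ a set composition of some $A\subseteq[n]$ with all blocks of size $\ge r$ and $\Pi$ a set partition of $[n]\setminus A$ with all blocks of size $<r$. $\mathbf{M}_{(\Phi,\Pi)}=\sum\mathbf{x}_{i_1}\cdots\mathbf{x}_{i_n}$ over tuples with $i_j=i_k$ iff $j,k$ lie in a common block of $\Phi$ or $\Pi$, and $i_j<i_k$ whenever $j\in\Phi_l,k\in\Phi_m$, $l<m$; $\mathrm{NCQSym}^r_n(\mathbf{x})$ is the $\mathbb{Q}$-span of these $\mathbf{M}_{(\Phi,\Pi)}$. An edge-coloured digraph is a finite simple digraph with each edge of type dashed ($\dashrightarrow$), solid ($\rightarrow$) or double ($\Rightarrow$); a proper vertex-colouring is $\kappa:V\to\mathbb{P}$ with $\kappa(a)\ne\kappa(b)$, $\kappa(a)<\kappa(b)$, $\kappa(a)\le\kappa(b)$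 for dashed, solid, double edges $(a,b)$ respectively. A labelled edge-coloured digraph $(G,L)$ has a bijection $L:V(G)\to[|V(G)|]$ and $\mathscr{Y}_{(G,L)}(\mathbf{x})=\sum_\kappa\mathbf{x}_{\kappa(L^{-1}(1))}\mathbf{x}_{\kappa(L^{-1}(2))}\cdots\mathbf{x}_{\kappa(L^{-1}(|V(G)|))}$ over proper vertex-colourings $\kappa$. For a finite set $A\subseteq\mathbb{P}$, $C_A$ is a directed cycle on $|A|$ vertices with all edges double and vertices labelled bijectively by $A$ (a single vertex with no edges if $|A|=1$). The dashed (resp. double) sum of two labelled edge-coloured digraphs is their disjoint union together with a dashed (resp. double) edge $(a,b)$ for every vertex $a$ of the first and $b$ of the second. Define $\overline{\mathbf{F}}_{(\Phi,\Pi)}=\mathscr{Y}_{(G,L)}(\mathbf{x})$ where $(G,L)$ is the dashed sum of $\big(C_{\Phi_1}$ double-sum $C_{\Phi_2}$ double-sum $\cdots$ double-sum $C_{\Phi_k}\big)$ and $\big(C_{\Pi_1}$ dashed-sum $\cdots$ dashed-sum $C_{\Pi_l}\big)$. *)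

(* Defs.v *)
From mathcomp Require Import all_boot all_order all_algebra.
Set Implicit Arguments. Unset Strict Implicit. Unset Printing Implicit Defensive.
Import GRing.Theory.
Local Open Scope ring_scope.

Section NCQSym.
Variable n : nat.

(* Positions 1..n are represented by the ordinals 'I_n (position j+1 <-> j).
   A monomial x_{i_1} ... x_{i_n} is represented by the word w : 'I_n -> nat
   (w j = i_{j+1}); only words with positive letters occur.  A homogeneous
   noncommutative formal power series of degree n over Q is the function
   giving the coefficient of each monomial. *)
Definition word := 'I_n -> nat.
Definition ser := word -> rat.

Definition rsc_t := (seq {set 'I_n} * {set {set 'I_n}})%type.

Definition covered (Phi : seq {set 'I_n}) : {set 'I_n} := \bigcup_(B <- Phi) B.

Definition is_rsc (r : nat) (x : rsc_t) : bool :=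
  let Phi := x.1 in let Pi := x.2 in
  [&& all (fun B : {set 'I_n} => B != set0) Phi,
      pairwise (fun B C : {set 'I_n} => [disjoint B & C]) Phi,
      all (fun B : {set 'I_n} => r <= #|B|)%N Phi,
      partition Pi (~: covered Phi) &
      [forall B in Pi, #|B| < r]%N].

Definition sameblock (x : rsc_t) (j k : 'I_n) : bool :=
  has (fun B : {set 'I_n} => (j \in B) && (k \in B)) (x.1 ++ enum x.2).

Definition Mcoef (x : rsc_t) (w : word) : bool :=
  [&& [forall j, 0 < w j]%N,
      [forall j, forall k, (w j == w k) == sameblock x j k] &
      [forall l : 'I_(size x.1), forall m : 'I_(size x.1),
         (l < m)%N ==> [forall j in nth set0 x.1 l, forall k in nth set0 x.1 m,
                          (w j < w k)%N]]].

Definition M (x : rsc_t) : ser := fun w => if Mcoef x w then 1 else 0.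

(* Labelled edge-coloured digraphs whose vertices are labels in [n];
   edge a b = Some c means there is an edge (a,b) of colour c. *)
Inductive ecol := Dashed | Solid | Double.

Record lgraph := LGraph { verts : {set 'I_n}; edge : 'I_n -> 'I_n -> option ecol }.

Definition lempty : lgraph := LGraph set0 (fun _ _ => None).

Definition Ccyc (A : {set 'I_n}) : lgraph :=
  LGraph A (fun a b => if [&& a \in A, b \in A, a != b & next (enum A) a == b]
                       then Some Double else None).

(* c-sum of two graphs on disjoint vertex sets *)
Definition lsum (c : ecol) (G1 G2 : lgraph) : lgraph :=
  LGraph (verts G1 :|: verts G2)
    (fun a b => if (a \in verts G1) && (b \in verts G2) then Some c
                else match edge G1 a b with Some e => Some e | None => edge G2 a b end).

Definition edge_ok (e : option ecol) (ka kb : nat) : bool :=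
  match e with
  | Some Dashed => ka != kb
  | Some Solid => (ka < kb)%N
  | Some Double => (ka <= kb)%N
  | None => true
  end.

(* Y_(G,L) for a graph whose vertex set is all of [n], labelled by L = id:
   the coefficient of x_{w 1}...x_{w n} is the number of proper colourings
   kappa with kappa(L^{-1} j) = w j, i.e. 1 iff kappa := w is proper. *)
Definition proper (G : lgraph) (kappa : word) : bool :=
  [forall a, 0 < kappa a]%N &&
  [forall a, forall b, ((a \in verts G) && (b \in verts G)) ==>
                        edge_ok (edge G a b) (kappa a) (kappa b)].

Definition Y (G : lgraph) : ser := fun w => if proper G w then 1 else 0.

Definition Fgraph (x : rsc_t) : lgraph :=
  lsum Dashed (foldr (lsum Double) lempty [seq Ccyc B | B <- x.1])
              (foldr (lsum Dashed) lempty [seq Ccyc B | B <- enum x.2]).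

Definition Fbar (x : rsc_t) : ser := Y (Fgraph x).

Definition lincomb (f : rsc_t -> ser) (s : seq rsc_t) (c : rsc_t -> rat) : ser :=
  fun w => \sum_(y <- s) c y * f y w.

Definition NCQSym (r : nat) (g : ser) : Prop :=
  exists s c, all (is_rsc r) s /\ forall w, g w = lincomb M s c w.

Definition is_basis (V : ser -> Prop) (S : pred rsc_t) (f : rsc_t -> ser) : Prop :=
  [/\ (forall x, S x -> V (f x)),
      (forall g, V g -> exists s c, all S s /\ forall w, g w = lincomb f s c w) &
      (forall s c, uniq s -> all S s -> (forall w, lincomb f s c w = 0) ->
                   forall x, x \in s -> c x = 0)].

End NCQSym.

(* Main.v *)
Require Import Defs.
From mathcomp Require Import all_boot all_order all_algebra zify.
Set Implicit Arguments. Unset Strict Implicit. Unset Printing Implicit Defensive.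
Import GRing.Theory.


Section Work.
Variables (n r : nat).
Local Notation rsc := (rsc_t n).
Local Notation wrd := (word n).

Definition Lb (x : rsc) : seq {set 'I_n} := x.1 ++ enum x.2.

Lemma mem_covered (P : seq {set 'I_n}) j :
  (j \in covered P) = has (fun B : {set 'I_n} => j \in B) P.
Proof.
elim: P => [|B P IH]; rewrite /covered ?big_nil ?big_cons ?inE //.
by rewrite /= -IH.
Qed.

Lemma disjP (T : finType) (A B : {set T}) :
  reflect (forall j, j \in A -> j \in B -> False) [disjoint A & B].
Proof.
apply: (iffP idP) => [hd j hA hB | H]; first by rewrite (disjointFr hd hA) in hB.
rewrite -setI_eq0; apply/eqP/setP => j; rewrite !inE.
by apply/negP => /andP [hA hB]; apply: (H j).
Qed.

Lemma pw_mem (T : eqType) (rr : rel T) (s : seq T) a b :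
  (forall u v, rr u v -> rr v u) -> pairwise rr s -> a \in s -> b \in s ->
  a != b -> rr a b.
Proof.
move=> sym /(pairwiseP a) H ha hb hab.
have ia := index_mem a s; have ib := index_mem b s.
rewrite ha in ia; rewrite hb in ib.
have ea := nth_index a ha; have eb := nth_index a hb.
case: (ltngtP (index a s) (index b s)) => h.
- by rewrite -ea -eb; apply: H.
- by apply: sym; rewrite -ea -eb; apply: H.
- by move: hab; rewrite -ea -eb h eqxx.
Qed.

Lemma rsc_disj x B C : is_rsc r x -> B \in Lb x -> C \in Lb x -> B != C ->
  [disjoint B & C].
Proof.
case/and5P => h1 h2 h3 /and3P [/eqP hcov htriv h0] h5.
have crossP : forall B C, B \in x.1 -> C \in x.2 -> [disjoint B & C].
  move=> B' C' hB hC; apply/disjP => j jB jC.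
  have : j \in cover x.2 by apply/bigcupP; exists C'.
  rewrite hcov inE mem_covered => /hasPn /(_ _ hB); by rewrite jB.
rewrite /Lb !mem_cat !mem_enum => /orP [hB|hB] /orP [hC|hC] hBC.
- apply: (pw_mem _ h2) => // u v; by rewrite disjoint_sym.
- exact: crossP.
- by rewrite disjoint_sym; apply: crossP.
- by move/trivIsetP: htriv; apply.
Qed.

Lemma rsc_nz x B : is_rsc r x -> B \in Lb x -> B != set0.
Proof.
case/and5P => h1 h2 h3 /and3P [/eqP hcov htriv h0] h5.
rewrite /Lb mem_cat mem_enum => /orP [hB|hB].
- by move/allP: h1; apply.
- by apply: contraNneq h0 => <-.
Qed.

Lemma rsc_same x B C j : is_rsc r x -> B \in Lb x -> C \in Lb x ->
  j \in B -> j \in C -> B = C.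
Proof.
move=> hx hB hC jB jC; case: (eqVneq B C) => // hne; exfalso.
by have := rsc_disj hx hB hC hne; move/disjP => /(_ j jB jC).
Qed.

Lemma rsc_cover x j : is_rsc r x -> has (fun B : {set 'I_n} => j \in B) (Lb x).
Proof.
case/and5P => h1 h2 h3 /and3P [/eqP hcov htriv h0] h5.
rewrite /Lb has_cat; case: (boolP (j \in covered x.1)).
- by rewrite mem_covered => ->.
- rewrite -in_setC -hcov => /bigcupP [C hC jC]; apply/orP; right.
  by apply/hasP; exists C; rewrite ?mem_enum.
Qed.

Lemma rsc_uniq x : is_rsc r x -> uniq (Lb x).
Proof.
move=> hx; have hx' := hx; case/and5P: hx' => h1 h2 h3 _ _.
rewrite /Lb cat_uniq enum_uniq andbT; apply/andP; split.
- apply/(uniqPn set0) => -[i [j [hij hj heq]]].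
  move/(pairwiseP set0): h2 => /(_ i j) H.
  have hi : i < size x.1 by apply: ltn_trans hj.
  have := H hi hj hij; rewrite heq => /disjP hd.
  have : nth set0 x.1 j != set0 by move/allP: h1; apply; apply: mem_nth.
  case/set0Pn => k hk; by have := hd k hk hk.
- apply/hasPn => B; rewrite mem_enum => hB; apply/negP => hB1.
  have hL1 : B \in Lb x by rewrite /Lb mem_cat hB1.
  have hL2 : B \in Lb x by rewrite /Lb mem_cat mem_enum hB orbT.
  (* B in both x.1 and x.2: B subset covered and complement *)
  case/and5P: hx => _ _ _ /and3P [/eqP hcov _ h0] _.
  have : B != set0 by apply: contraNneq h0 => <-.
  case/set0Pn => k hk.
  have : k \in cover x.2 by apply/bigcupP; exists B.
  by rewrite hcov inE mem_covered; apply/negP; rewrite negbK; apply/hasP; exists B.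
Qed.


Definition bidx (x : rsc) (j : 'I_n) := find (fun B : {set 'I_n} => j \in B) (Lb x).

Lemma bidx_lt x j : is_rsc r x -> bidx x j < size (Lb x).
Proof. by move=> hx; rewrite /bidx -has_find; apply: rsc_cover. Qed.

Lemma bidx_mem x j : is_rsc r x -> j \in nth set0 (Lb x) (bidx x j).
Proof. by move=> hx; apply: (nth_find set0 (rsc_cover j hx)). Qed.

Lemma bidx_eq x j i : is_rsc r x -> i < size (Lb x) -> j \in nth set0 (Lb x) i ->
  bidx x j = i.
Proof.
move=> hx hi hj.
have h1 := bidx_lt j hx; have h2 := bidx_mem j hx.
have e := rsc_same hx (mem_nth set0 h1) (mem_nth set0 hi) h2 hj.
by apply/eqP; rewrite -(nth_uniq set0 h1 hi (rsc_uniq hx)) e.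
Qed.

Lemma sameblockE x j k : is_rsc r x -> sameblock x j k = (bidx x j == bidx x k).
Proof.
move=> hx; rewrite /sameblock; apply/idP/idP.
- case/hasP => B hB /andP [jB kB].
  have hi : index B (Lb x) < size (Lb x) by rewrite index_mem.
  have e : nth set0 (Lb x) (index B (Lb x)) = B by rewrite nth_index.
  by rewrite (bidx_eq hx hi) ?e // (bidx_eq hx hi) ?e.
- move/eqP => e; apply/hasP; exists (nth set0 (Lb x) (bidx x j)).
    by apply: mem_nth; apply: bidx_lt.
  by rewrite bidx_mem // e bidx_mem.
Qed.

Lemma nth_Lb x l : l < size x.1 -> nth set0 (Lb x) l = nth set0 x.1 l.
Proof. by move=> hl; rewrite /Lb nth_cat hl. Qed.

Definition word_of (x : rsc) : wrd := fun j => (bidx x j).+1.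

Lemma Mcoef_word_of x : is_rsc r x -> Mcoef x (word_of x).
Proof.
move=> hx; apply/and3P; split.
- by apply/forallP.
- apply/forallP => j; apply/forallP => k; by rewrite sameblockE // eqSS.
- apply/forallP => l; apply/forallP => m; apply/implyP => hlm.
  apply/forall_inP => j hj; apply/forall_inP => k hk.
  have hl := ltn_ord l; have hm := ltn_ord m.
  have hsz : size x.1 <= size (Lb x) by rewrite /Lb size_cat leq_addr.
  rewrite /word_of ltnS (bidx_eq (i := l) hx) ?(bidx_eq (i := m) hx) ?nth_Lb //.
  + exact: leq_trans hm hsz.
  + exact: leq_trans hl hsz.
Qed.


Definition blk (w : wrd) (j : 'I_n) : {set 'I_n} := [set k | w k == w j].
Definition vals (w : wrd) : seq nat := sort leq (undup [seq w j | j <- enum 'I_n]).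
Definition bv (w : wrd) (v : nat) : {set 'I_n} := [set k | w k == v].
Definition canon (w : wrd) : rsc :=
  ([seq B : {set 'I_n} <- [seq bv w v | v <- vals w] | r <= #|B|],
   [set B in [set blk w j | j : 'I_n] | #|B| < r]).

Lemma blk_self w j : j \in blk w j.
Proof. by rewrite inE. Qed.

Lemma blk_eq w i j : j \in blk w i -> blk w i = blk w j.
Proof. by rewrite inE => /eqP e; apply/setP => k; rewrite !inE e. Qed.

Lemma mem_vals w v : (v \in vals w) = [exists j, w j == v].
Proof.
rewrite /vals mem_sort mem_undup; apply/mapP/existsP => [[j _ ->]|[j /eqP <-]].
  by exists j.
by exists j; rewrite ?mem_enum.
Qed.

Lemma mem_canon1 w B :
  (B \in (canon w).1) = (r <= #|B|) && [exists j, B == blk w j].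
Proof.
rewrite /canon /= mem_filter; congr (_ && _).
apply/mapP/existsP => [[v] | [j /eqP ->]].
  by rewrite mem_vals => /existsP [j /eqP <-] ->; exists j.
by exists (w j); rewrite // mem_vals; apply/existsP; exists j.
Qed.

Lemma mem_canon2 w B :
  (B \in (canon w).2) = (#|B| < r) && [exists j, B == blk w j].
Proof.
rewrite /canon /= !inE andbC; congr (_ && _).
apply/imsetP/existsP => [[j _ ->] | [j /eqP ->]]; by exists j.
Qed.

Definition ltB (w : wrd) (B C : {set 'I_n}) :=
  [&& B != set0, C != set0 & [forall j in B, forall k in C, w j < w k]].

Lemma ltB_trans w : transitive (ltB w).
Proof.
move=> B A C /and3P [hA hB /forall_inP h1] /and3P [_ hC /forall_inP h2].
apply/and3P; split => //; apply/forall_inP => j jA; apply/forall_inP => k kC.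
case/set0Pn: hB => i iB.
have := forall_inP (h1 j jA) i iB; have := forall_inP (h2 i iB) k kC.
move=> a b; exact: ltn_trans b a.
Qed.

Lemma ltB_irr w : irreflexive (ltB w).
Proof.
move=> B; apply/negP => /and3P [hB _ /forall_inP h].
case/set0Pn: hB => j jB; by have := forall_inP (h j jB) j jB; rewrite ltnn.
Qed.

Lemma ltB_disj w B C : ltB w B C -> [disjoint B & C].
Proof.
case/and3P => _ _ /forall_inP h; apply/disjP => j jB jC.
by have := forall_inP (h j jB) j jC; rewrite ltnn.
Qed.

Lemma canon1_pw w : pairwise (ltB w) (canon w).1.
Proof.
rewrite /canon /=; apply: pairwise_filter; rewrite pairwise_map.
have hs : sorted ltn (vals w).
  by rewrite ltn_sorted_uniq_leq sort_uniq undup_uniq sort_sorted //; apply: leq_total.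
rewrite sorted_pairwise in hs; last by move=> ???; apply: ltn_trans.
apply: (sub_in_pairwise (P := mem (vals w))) hs; last by apply/allP.
move=> u v hu hv huv /=; apply/and3P; split.
- move: hu; rewrite mem_vals => /existsP [j /eqP hj]; apply/set0Pn; exists j.
  by rewrite inE hj.
- move: hv; rewrite mem_vals => /existsP [j /eqP hj]; apply/set0Pn; exists j.
  by rewrite inE hj.
- apply/forall_inP => j; rewrite inE => /eqP ->; apply/forall_inP => k.
  by rewrite inE => /eqP ->.
Qed.

Lemma canon_rsc w : is_rsc r (canon w).
Proof.
apply/and5P; split.
- apply/allP => B; rewrite mem_canon1 => /andP [_ /existsP [j /eqP ->]].
  by apply/set0Pn; exists j; apply: blk_self.
- apply: sub_pairwise (canon1_pw w) => B C; exact: ltB_disj.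
- by apply/allP => B; rewrite mem_canon1 => /andP [].
- apply/and3P; split.
  + apply/eqP/setP => j; rewrite inE mem_covered; apply/bigcupP/hasPn.
    * case=> B; rewrite mem_canon2 => /andP [hB /existsP [i /eqP eB]] ji.
      subst B; rewrite (blk_eq ji) in hB.
      move=> C; rewrite mem_canon1 => /andP [hC /existsP [i' /eqP eC]].
      subst C; apply/negP => ji'; rewrite (blk_eq ji') in hC.
      by move: (leq_ltn_trans hC hB); rewrite ltnn.
    * move=> H; exists (blk w j); last by apply: blk_self.
      rewrite mem_canon2; apply/andP; split; last by apply/existsP; exists j.
      rewrite ltnNge; apply/negP => hge.
      have := H (blk w j); rewrite mem_canon1 hge blk_self /=.
      move=> hh; suff : false by []; apply: hh; by apply/existsP; exists j.
  + apply/trivIsetP => B C.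
    rewrite !mem_canon2 => /andP [_ /existsP [i /eqP ->]] /andP [_ /existsP [i' /eqP ->]] hne.
    apply/disjP => j ji ji'; move: hne; by rewrite (blk_eq ji) (blk_eq ji') eqxx.
  + rewrite mem_canon2; apply/negP => /andP [_ /existsP [j /eqP e]].
    by have := blk_self w j; rewrite -e inE.
- by apply/forall_inP => B; rewrite mem_canon2 => /andP [].
Qed.


Lemma Mcoef_canon w : (forall j, 0 < w j) -> Mcoef (canon w) w.
Proof.
move=> hpos; apply/and3P; split.
- by apply/forallP.
- apply/forallP => j; apply/forallP => k; apply/eqP; apply/idP/idP.
  + move/eqP=> e; apply/hasP; exists (blk w j); last by rewrite !inE e !eqxx.
    rewrite mem_cat mem_enum mem_canon1 mem_canon2.
    have hex : [exists i, blk w j == blk w i] by apply/existsP; exists j.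
    by rewrite hex !andbT; case: leqP.
  + case/hasP => B; rewrite mem_cat mem_enum mem_canon1 mem_canon2 => hB /andP [jB kB].
    have [i eB] : exists i, B = blk w i.
      by case/orP: hB => /andP [_ /existsP [i /eqP ->]]; exists i.
    by move: jB kB; rewrite eB !inE => /eqP -> /eqP ->.
- apply/forallP => l; apply/forallP => m; apply/implyP => hlm.
  have := canon1_pw w; move/(pairwiseP set0) => /(_ l m (ltn_ord l) (ltn_ord m) hlm).
  by case/and3P.
Qed.

Lemma blkL w y B j : is_rsc r y -> Mcoef y w -> B \in Lb y -> j \in B -> B = blk w j.
Proof.
move=> hy /and3P [_ /forallP hk _] hB jB; apply/setP => k; rewrite inE.
have := hk j => /forallP /(_ k) /eqP.
rewrite eq_sym => ->; apply/idP/idP => [kB|].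
  by apply/hasP; exists B; rewrite ?jB ?kB.
case/hasP => C hC /andP [jC kC]; by rewrite (rsc_same hy hB hC jB jC).
Qed.

Lemma canon_uniq w y : is_rsc r y -> Mcoef y w -> y = canon w.
Proof.
move=> hy hM.
have hy' := hy; case/and5P: hy' => h1 h2 h3 /and3P [/eqP hcov htriv h0] h5.
have hM' := hM; case/and3P: hM' => hpos hk /forallP hord.
have inL1 : forall B, B \in y.1 -> B \in Lb y by move=> B hB; rewrite /Lb mem_cat hB.
have inL2 : forall B, B \in y.2 -> B \in Lb y by move=> B hB; rewrite /Lb mem_cat mem_enum hB orbT.
have e1 : y.1 = (canon w).1.
  apply: (irr_sorted_eq (@ltB_trans w) (@ltB_irr w)).
  - rewrite sorted_pairwise; last exact: (@ltB_trans w).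
    apply/(pairwiseP set0) => l m hl hm hlm; apply/and3P; split.
    + by apply: (rsc_nz hy); apply: inL1; apply: mem_nth.
    + by apply: (rsc_nz hy); apply: inL1; apply: mem_nth.
    + have := hord (Ordinal hl) => /forallP /(_ (Ordinal hm)) /implyP /(_ hlm).
      by [].
  - rewrite sorted_pairwise; last exact: (@ltB_trans w).
    exact: canon1_pw.
  - move=> B; rewrite mem_canon1; apply/idP/idP.
    + move=> hB; have /set0Pn [j jB] := rsc_nz hy (inL1 _ hB).
      rewrite (blkL hy hM (inL1 _ hB) jB).
      rewrite -(blkL hy hM (inL1 _ hB) jB) (allP h3 _ hB) /=.
      by apply/existsP; exists j; rewrite (blkL hy hM (inL1 _ hB) jB).
    + case/andP => hr' /existsP [j /eqP eB]; subst B.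
      case/hasP: (rsc_cover j hy) => C hC jC.
      rewrite -(blkL hy hM hC jC) in hr' *.
      move: hC; rewrite /Lb mem_cat mem_enum => /orP [] // hC.
      by have := forall_inP h5 C hC; rewrite ltnNge hr'.
have e2 : y.2 = (canon w).2.
  apply/setP => B; rewrite mem_canon2; apply/idP/idP.
  + move=> hB; have /set0Pn [j jB] := rsc_nz hy (inL2 _ hB).
    rewrite (forall_inP h5 _ hB) /=.
    by apply/existsP; exists j; rewrite (blkL hy hM (inL2 _ hB) jB).
  + case/andP => hr' /existsP [j /eqP eB]; subst B.
    case/hasP: (rsc_cover j hy) => C hC jC.
    rewrite -(blkL hy hM hC jC) in hr' *.
    move: hC; rewrite /Lb mem_cat mem_enum => /orP [] // hC.
    by have := allP h3 C hC; rewrite leqNgt hr'.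
by rewrite [y]surjective_pairing e1 e2.
Qed.

End Work.


Lemma cyc_const (T : eqType) (s : seq T) (f : T -> nat) :
  uniq s -> (forall a, a \in s -> f a <= f (next s a)) ->
  forall a b, a \in s -> b \in s -> f a = f b.
Proof.
case: s => [|x0 s'] // hu H.
set s := x0 :: s'.
have step : forall i, i.+1 < size s -> f (nth x0 s i) <= f (nth x0 s i.+1).
  move=> i hi; have hi' : i < size s by apply: ltnW.
  have := H (nth x0 s i) (mem_nth x0 hi').
  by rewrite next_nth mem_nth // index_uniq.
have lastst : f (nth x0 s (size s').+1.-1) <= f x0.
  have hi' : size s' < size s by [].
  have := H (nth x0 s (size s')) (mem_nth x0 hi').
  by rewrite next_nth mem_nth // index_uniq //= (nth_default x0 (leqnn (size s'))).  
have chain : forall i j, i <= j -> j < size s -> f (nth x0 s i) <= f (nth x0 s j).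
  move=> i j hij; elim: j hij => [|j IH] hij hj.
    by move: hij; rewrite leqn0 => /eqP ->.
  move: hij; rewrite leq_eqVlt => /orP [/eqP -> //| hij].
  apply: leq_trans (IH hij (ltnW hj)) (step j hj).
have all_eq : forall i, i < size s -> f (nth x0 s i) = f x0.
  move=> i hi; apply/eqP; rewrite eqn_leq; apply/andP; split.
    apply: leq_trans (chain i (size s') _ _) lastst => //.
  by have := chain 0 i (leq0n _) hi.
move=> a b ha hb.
by rewrite -(nth_index x0 ha) -(nth_index x0 hb) !all_eq ?index_mem.
Qed.

Section Graph.
Variable n : nat.
Local Notation wrd := (word n).
Local Notation G := (lgraph n).

Definition prP (g : G) (w : wrd) :=
  forall a b, a \in verts g -> b \in verts g -> edge_ok (edge g a b) (w a) (w b).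
Definition supp (g : G) :=
  forall a b e, edge g a b = Some e -> (a \in verts g) && (b \in verts g).

Lemma properGE g w : Defs.proper g w <-> (forall a, 0 < w a) /\ prP g w.
Proof.
split.
- case/andP => /forallP h1 /forallP h2; split => // a b ha hb.
  by have := h2 a => /forallP /(_ b) /implyP; apply; rewrite ha hb.
- case=> h1 h2; apply/andP; split; first by apply/forallP.
  apply/forallP => a; apply/forallP => b; apply/implyP => /andP [ha hb]; exact: h2.
Qed.

Lemma lsum_supp c g1 g2 : supp g1 -> supp g2 -> supp (lsum c g1 g2).
Proof.
move=> s1 s2 a b e /=; rewrite !inE.
case: ifP => [/andP [-> ->] _|_]; first by rewrite orbT.
case e1: (edge g1 a b) => [e'|] he.
  by have := s1 a b e' e1 => /andP [-> ->].
by have := s2 a b e he => /andP [-> ->]; rewrite ?orbT.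
Qed.

Lemma lsum_pr c g1 g2 w : supp g1 -> supp g2 -> [disjoint verts g1 & verts g2] ->
  prP (lsum c g1 g2) w <->
  [/\ prP g1 w, prP g2 w & forall a b, a \in verts g1 -> b \in verts g2 ->
                                        edge_ok (Some c) (w a) (w b)].
Proof.
move=> s1 s2 hd; split.
- move=> H; split.
  + move=> a b ha hb; have := H a b; rewrite /= !inE ha hb /=.
    rewrite (disjointFr hd hb).
    by case: (edge g1 a b) => [e|] // /(_ isT isT).
  + move=> a b ha hb; have := H a b; rewrite /= !inE ha hb !orbT.
    rewrite (disjointFl hd ha) /=.
    case e1: (edge g1 a b) => [e|]; last by move/(_ isT isT).
    by have := s1 a b e e1; rewrite (disjointFl hd ha).
  + move=> a b ha hb; have := H a b; rewrite /= !inE ha hb orbT /=.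
    by move/(_ isT isT).
- case=> h1 h2 h3 a b /=; rewrite !inE.
  case: ifP => [/andP [ha hb] _ _ | _ _ _]; first exact: h3.
  case e1: (edge g1 a b) => [e|].
    have /andP [ha hb] := s1 a b e e1.
    by have := h1 a b ha hb; rewrite e1.
  case e2: (edge g2 a b) => [e|] //.
  have /andP [ha hb] := s2 a b e e2.
  by have := h2 a b ha hb; rewrite e2.
Qed.

Lemma Ccyc_supp A : supp (Ccyc A).
Proof. by move=> a b e /=; case: ifP => // /and4P [-> ->]. Qed.

Definition constb (w : wrd) (B : {set 'I_n}) :=
  [forall a in B, forall b in B, w a == w b].

Lemma Ccyc_pr A w : prP (Ccyc A) w <-> constb w A.
Proof.
split.
- move=> H; apply/forall_inP => a ha; apply/forall_inP => b hb; apply/eqP.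
  apply: (@cyc_const _ (enum A) w (enum_uniq _)) => //; last by rewrite mem_enum.
  + move=> c; rewrite mem_enum => hc.
    case: (eqVneq c (next (enum A) c)) => [<- //|hne].
    have hn : next (enum A) c \in A by rewrite -mem_enum mem_next mem_enum.
    have := H c _ hc hn; rewrite /= hc hn hne eqxx /=; exact.
  + by rewrite mem_enum.
- move/forall_inP => H a b /= ha hb; case: ifP => // _ /=.
  by have := forall_inP (H a ha) b hb => /eqP ->.
Qed.

Definition GL c (L : seq {set 'I_n}) := foldr (lsum c) (lempty n) [seq Ccyc B | B <- L].

Definition Rc c (w : wrd) (B C : {set 'I_n}) :=
  [forall a in B, forall b in C, edge_ok (Some c) (w a) (w b)].

Lemma GL_verts c L : verts (GL c L) = covered L.
Proof.
elim: L => [|B L IH]; first by rewrite /covered big_nil.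
by rewrite [covered _]/covered big_cons -/(covered L) -IH.
Qed.

Lemma GL_supp c L : supp (GL c L).
Proof.
elim: L => [|B L IH]; first by move=> a b e.
by apply: lsum_supp => //; apply: Ccyc_supp.
Qed.

Lemma GL_pr c L w : pairwise (fun B C : {set 'I_n} => [disjoint B & C]) L ->
  prP (GL c L) w <-> all (constb w) L && pairwise (Rc c w) L.
Proof.
elim: L => [|B L IH]; first by split => // a b; rewrite /= inE.
rewrite pairwise_cons => /andP [hall hpw].
have hd : [disjoint verts (Ccyc B) & verts (GL c L)].
  rewrite GL_verts /=; apply/disjP => j jB; rewrite mem_covered => /hasP [C hC jC].
  by have := allP hall C hC => /disjP /(_ j jB jC).
have E := @lsum_pr c _ _ w (@Ccyc_supp B) (@GL_supp c L) hd.
rewrite /GL /= -/(GL c L) /=; split.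
- move/E => [h1 h2 h3]; have [h4 h5] := andP ((IH hpw).1 h2).
  rewrite h4 h5 (Ccyc_pr B w).1 //= !andbT.
  apply/allP => C hC; apply/forall_inP => a ha; apply/forall_inP => b hb.
  apply: h3 => //; rewrite GL_verts mem_covered; apply/hasP; by exists C.
- case/andP => /andP [hB h4] /andP [h5 h6]; apply/E; split.
  + exact/Ccyc_pr.
  + by apply/(IH hpw); rewrite h4 h6.
  + move=> a b ha; rewrite GL_verts mem_covered => /hasP [C hC hb].
    by have := allP h5 C hC => /forall_inP /(_ a ha) /forall_inP /(_ b hb).
Qed.

End Graph.


Section Fch.
Variables (n r : nat).
Local Notation rsc := (rsc_t n).
Local Notation wrd := (word n).

Definition Fch (x : rsc) (w : wrd) := [/\ forall j, 0 < w j,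
  forall j k, sameblock x j k -> w j = w k,
  forall l m, l < m -> m < size x.1 -> forall j k,
     j \in nth set0 x.1 l -> k \in nth set0 x.1 m -> w j <= w k &
  forall B, B \in x.2 -> forall j k, j \in B -> k \notin B -> w j != w k].

Lemma Rc_sym (w : wrd) : forall u v, Rc Dashed w u v -> Rc Dashed w v u.
Proof.
move=> u v /forall_inP H; apply/forall_inP => a ha; apply/forall_inP => b hb.
by have := forall_inP (H b hb) a ha; rewrite /= eq_sym.
Qed.

Lemma Fbar_ch x w : is_rsc r x -> (Defs.proper (Fgraph x) w <-> Fch x w).
Proof.
move=> hx; have hx' := hx.
case/and5P: hx' => h1 h2 h3 /and3P [/eqP hcov htriv h0] h5.
have inL1 : forall B, B \in x.1 -> B \in Lb x by move=> B hB; rewrite /Lb mem_cat hB.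
have inL2 : forall B, B \in x.2 -> B \in Lb x by move=> B hB; rewrite /Lb mem_cat mem_enum hB orbT.
have pw2 : pairwise (fun B C : {set 'I_n} => [disjoint B & C]) (enum x.2).
  apply/(pairwiseP set0) => i j hi hj hij; apply: (rsc_disj hx).
  - by apply: inL2; rewrite -mem_enum; apply: mem_nth.
  - by apply: inL2; rewrite -mem_enum; apply: mem_nth.
  - by rewrite (nth_uniq set0 hi hj (enum_uniq _)) neq_ltn hij.
have notcov : forall C a, C \in x.2 -> a \in C -> a \in covered x.1 -> False.
  move=> C a hC aC; have : a \in cover x.2 by apply/bigcupP; exists C.
  by rewrite hcov inE => /negP.
have hd : [disjoint verts (GL Double x.1) & verts (GL Dashed (enum x.2))].
  rewrite !GL_verts; apply/disjP => j j1; rewrite mem_covered => /hasP [C].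
  by rewrite mem_enum => hC jC; apply: (notcov C j).
have E := @lsum_pr _ Dashed _ _ w (@GL_supp _ Double x.1) (@GL_supp _ Dashed (enum x.2)) hd.
have E1 := @GL_pr _ Double x.1 w h2.
have E2 := @GL_pr _ Dashed (enum x.2) w pw2.
change (Defs.proper (lsum Dashed (GL Double x.1) (GL Dashed (enum x.2))) w <-> Fch x w).
split.
- case/properGE => hpos /E [/E1 /andP [c1 p1] /E2 /andP [c2 p2] h3'].
  split => //.
  + move=> j k /hasP [B]; rewrite mem_cat => /orP [] hB /andP [jB kB].
    * by have := forall_inP (forall_inP (allP c1 B hB) j jB) k kB => /eqP.
    * by have := forall_inP (forall_inP (allP c2 B hB) j jB) k kB => /eqP.
  + move=> l m hlm hm j k hj hk.
    have := (pairwiseP set0 p1) l m (ltn_trans hlm hm) hm hlm.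
    by move=> /forall_inP /(_ j hj) /forall_inP /(_ k hk).
  + move=> B hB j k jB kB; case/hasP: (rsc_cover k hx) => C.
    rewrite mem_cat => /orP [] hC kC.
    * have := h3' k j; rewrite !GL_verts !mem_covered /= eq_sym; apply.
        by apply/hasP; exists C.
      by apply/hasP; exists B; rewrite ?mem_enum.
    * have hne : B != C by apply: contraNneq kB => ->.
      have hB' : B \in enum x.2 by rewrite mem_enum.
      have := pw_mem (@Rc_sym w) p2 hB' hC hne.
      by move=> /forall_inP /(_ j jB) /forall_inP /(_ k kC).
- case=> hpos hsame hord hpi; apply/properGE; split => //; apply/E; split.
  + apply/E1; apply/andP; split.
    * apply/allP => B hB; apply/forall_inP => a ha; apply/forall_inP => b hb.
      by apply/eqP; apply: hsame; apply/hasP; exists B; rewrite ?inL1 ?ha ?hb.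
    * apply/(pairwiseP set0) => l m hl hm hlm; apply/forall_inP => a ha.
      by apply/forall_inP => b hb; apply: (hord l m).
  + apply/E2; apply/andP; split.
    * apply/allP => B; rewrite mem_enum => hB; apply/forall_inP => a ha.
      apply/forall_inP => b hb.
      by apply/eqP; apply: hsame; apply/hasP; exists B; rewrite ?inL2 ?ha ?hb.
    * apply/(pairwiseP set0) => i j hi hj hij; apply/forall_inP => a ha.
      apply/forall_inP => b hb; apply: (hpi (nth set0 (enum x.2) i)) => //.
        by rewrite -mem_enum; apply: mem_nth.
      have := (pairwiseP set0 pw2) i j hi hj hij.
      by move/disjP => /(_ b) H; apply/negP => /H; apply.
  + move=> a b; rewrite !GL_verts !mem_covered => ha /hasP [C]; rewrite mem_enum.
    move=> hC bC /=; rewrite eq_sym; apply: (hpi C hC) => //.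
    by apply/negP => aC; apply: (notcov C a) => //; rewrite mem_covered.
Qed.

End Fch.


Section Main.
Variables (n r : nat).
Local Notation rsc := (rsc_t n).
Local Notation wrd := (word n).

Definition Q (x : rsc) := #|[set p : 'I_n * 'I_n | sameblock x p.1 p.2]|.

Lemma Mcoef_ord (y : rsc) w a b j k : Mcoef y w -> a < b -> b < size y.1 ->
  j \in nth set0 y.1 a -> k \in nth set0 y.1 b -> w j < w k.
Proof.
case/and3P => _ _ /forallP hord hab hb hj hk.
have ha : a < size y.1 by apply: ltn_trans hb.
have := hord (Ordinal ha) => /forallP /(_ (Ordinal hb)) /implyP /(_ hab).
by move=> /forall_inP /(_ j hj) /forall_inP /(_ k hk).
Qed.

Lemma Mcoef_same (y : rsc) w j k : Mcoef y w -> (w j == w k) = sameblock y j k.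
Proof. by case/and3P => _ /forallP hk _; have := hk j => /forallP /(_ k) /eqP. Qed.

Lemma Mcoef_Fch (x : rsc) (w : wrd) : is_rsc r x -> Mcoef x w -> Fch x w.
Proof.
move=> hx hM; have hM' := hM; case/and3P: hM' => /forallP hpos _ _.
split => //.
- by move=> j k; rewrite -(Mcoef_same j k hM) => /eqP.
- by move=> l m hlm hm j k hj hk; apply: ltnW; apply: (Mcoef_ord hM hlm hm hj hk).
- move=> B hB j k jB kB; rewrite (Mcoef_same j k hM); apply/negP.
  case/hasP => C hC /andP [jC kC].
  have hBL : B \in Lb x by rewrite /Lb mem_cat mem_enum hB orbT.
  by move: kB; rewrite (rsc_same hx hBL hC jB jC) kC.
Qed.

Lemma tri (x y : rsc) (w : wrd) : is_rsc r x -> is_rsc r y -> Fch x w -> Mcoef y w ->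
  x = y \/ Q x < Q y.
Proof.
move=> hx hy [hpos hsame hord hpi] hM.
have sub : [set p : 'I_n * 'I_n | sameblock x p.1 p.2] \subset
           [set p : 'I_n * 'I_n | sameblock y p.1 p.2].
  apply/subsetP => -[j k]; rewrite !inE /= => hjk.
  by rewrite -(Mcoef_same j k hM) (hsame _ _ hjk).
case: (eqVneq [set p : 'I_n * 'I_n | sameblock x p.1 p.2]
              [set p : 'I_n * 'I_n | sameblock y p.1 p.2]) => [e | hne]; last first.
  by right; apply: proper_card; rewrite properEneq hne sub.
left.
have ss : forall j k, sameblock x j k = sameblock y j k.
  move=> j k; move/setP: e => /(_ (j, k)); by rewrite !inE.
have hMx : Mcoef x w.
  apply/and3P; split.
  - by apply/forallP.
  - by apply/forallP => j; apply/forallP => k; rewrite ss (Mcoef_same j k hM).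
  - apply/forallP => l; apply/forallP => m; apply/implyP => hlm.
    apply/forall_inP => j hj; apply/forall_inP => k hk.
    rewrite ltn_neqAle (hord l m hlm (ltn_ord m) j k hj hk) andbT.
    rewrite (Mcoef_same j k hM) -ss; apply/negP; case/hasP => C hC /andP [jC kC].
    have hl : l < size x.1 by apply: ltn_trans hlm (ltn_ord m).
    have hLl : nth set0 x.1 l \in Lb x by rewrite /Lb mem_cat mem_nth.
    have eC := rsc_same hx hC hLl jC hj.
    case/and5P: hx => _ /(pairwiseP set0) /(_ l m hl (ltn_ord m) hlm) hd _ _ _.
    by move/disjP: hd => /(_ k); apply; rewrite -?eC.
by rewrite (canon_uniq hx hMx) (canon_uniq hy hM).
Qed.

Lemma Fch_inv (x y : rsc) (w w' : wrd) : is_rsc r x -> is_rsc r y -> Mcoef y w -> Mcoef y w' ->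
  Fch x w -> Fch x w'.
Proof.
move=> hx hy hM hM' [hpos hsame hord hpi].
have hM'' := hM'; case/and3P: hM'' => /forallP hpos' _ _.
split => //.
- move=> j k hjk; apply/eqP; rewrite (Mcoef_same j k hM') -(Mcoef_same j k hM).
  by rewrite (hsame _ _ hjk).
- move=> l m hlm hm j k hj hk.
  have := hord l m hlm hm j k hj hk; rewrite leq_eqVlt => /orP [e|lt].
    by rewrite leq_eqVlt (Mcoef_same j k hM') -(Mcoef_same j k hM) e.
  apply: ltnW.
  have big : forall i (b : nat), b < size x.1 -> i \in nth set0 x.1 b ->
      blk w i \in y.1.
    move=> i b hb hi.
    case/hasP: (rsc_cover i hy) => D hD iD.
    have eD := blkL hy hM hD iD.
    move: hD; rewrite /Lb mem_cat mem_enum => /orP [hD|hD]; first by rewrite -eD.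
    have hsub : nth set0 x.1 b \subset D.
      apply/subsetP => i' hi'; rewrite eD inE; apply/eqP; apply: hsame.
      by apply/hasP; exists (nth set0 x.1 b); rewrite ?hi ?hi' /Lb ?mem_cat ?mem_nth.
    have r1 : r <= #|nth set0 x.1 b|.
      by case/and5P: hx => _ _ /allP h3 _ _; apply: h3; apply: mem_nth.
    case/and5P: hy => _ _ _ _ /forall_inP /(_ D hD) h5.
    by have := leq_trans r1 (subset_leq_card hsub); rewrite leqNgt h5.
  have hl : l < size x.1 by apply: ltn_trans hm.
  have bj := big j l hl hj; have bk := big k m hm hk.
  set a := index (blk w j) y.1; set b := index (blk w k) y.1.
  have ha : a < size y.1 by rewrite index_mem.
  have hb : b < size y.1 by rewrite index_mem.
  have ja : j \in nth set0 y.1 a by rewrite nth_index // blk_self.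
  have kb : k \in nth set0 y.1 b by rewrite nth_index // blk_self.
  case: (ltngtP a b) => hab.
  + exact: (Mcoef_ord hM' hab hb ja kb).
  + by have := Mcoef_ord hM hab ha kb ja; rewrite ltnNge ltnW.
  + move: kb; rewrite -hab /a nth_index // inE => /eqP e.
    by move: lt; rewrite e ltnn.
- move=> B hB j k jB kB; rewrite (Mcoef_same j k hM') -(Mcoef_same j k hM).
  exact: (hpi B hB j k jB kB).
Qed.

End Main.

Local Open Scope ring_scope.

Section Final.
Variables (n r : nat).
Local Notation rsc := (rsc_t n).
Local Notation wrd := (word n).

Definition seqs : seq (seq {set 'I_n}) :=
  flatten [seq [seq tval t | t <- enum {: k.-tuple {set 'I_n}}] | k <- iota 0 (#|{: {set 'I_n}}|).+1].

Definition Sall : seq rsc :=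
  undup [seq p <- [seq (s, P) | s <- seqs, P <- enum {: {set {set 'I_n}}}] | is_rsc r p].

Lemma mem_Sall x : (x \in Sall) = is_rsc r x.
Proof.
rewrite /Sall mem_undup mem_filter; case hx: (is_rsc r x) => //=.
rewrite [x]surjective_pairing; apply: allpairs_f; last by rewrite mem_enum.
apply/flatten_mapP; exists (size x.1).
  rewrite mem_iota /= add0n ltnS.
  have hu : uniq x.1 by have := rsc_uniq hx; rewrite /Lb cat_uniq => /andP [].
  by rewrite -(card_uniqP hu) max_card.
by apply/mapP; exists (in_tuple x.1); rewrite ?mem_enum.
Qed.

Lemma Sall_uniq : uniq Sall.
Proof. exact: undup_uniq. Qed.

Lemma sum_single (s : seq rsc) (F : rsc -> rat) (z : rsc) : uniq s -> z \in s ->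
  (forall y, y \in s -> y != z -> F y = 0) -> \sum_(y <- s) F y = F z.
Proof.
move=> hu hz H; rewrite (bigD1_seq z) //= big_seq_cond big1 ?addr0 //.
by move=> y /andP [hy hne]; apply: H.
Qed.

Lemma M_single (s : seq rsc) (c : rsc -> rat) (x : rsc) (w : wrd) :
  uniq s -> all (is_rsc r) s -> is_rsc r x -> x \in s -> Mcoef x w ->
  lincomb (@M n) s c w = c x.
Proof.
move=> hu hs hx hxs hM; rewrite /lincomb (@sum_single s _ x hu hxs).
  by rewrite /M hM mulr1.
move=> y hy hne; rewrite /M; case: ifP => hMy; last by rewrite mulr0.
by move: hne; rewrite (canon_uniq (allP hs y hy) hMy) (canon_uniq hx hM) eqxx.
Qed.



Lemma Fbar_one (x : rsc) w : is_rsc r x -> Fch x w -> Fbar x w = 1.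
Proof. by move=> hx /(Fbar_ch _ hx) hp; rewrite /Fbar /Y hp. Qed.

Lemma Fbar_nz (x : rsc) w : is_rsc r x -> Fbar x w != 0 -> Fch x w.
Proof.
move=> hx; rewrite /Fbar /Y; case: ifP => [hp _|]; last by rewrite eqxx.
by apply/(Fbar_ch _ hx); rewrite hp.
Qed.

Lemma all_Sall : all (is_rsc r) Sall.
Proof. by apply/allP => y; rewrite mem_Sall. Qed.

Lemma Frep (x : rsc) : is_rsc r x ->
  forall w, Fbar x w = lincomb (@M n) Sall (fun y => Fbar x (word_of y)) w.
Proof.
move=> hx w; case hp: [forall j, (0 < w j)%N].
- have hp' : forall j, (0 < w j)%N by apply/forallP.
  rewrite (M_single _ Sall_uniq all_Sall (canon_rsc r w)) ?mem_Sall ?canon_rsc //;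
    last by apply: Mcoef_canon.
  have hM1 := Mcoef_canon r hp'.
  have hM2 := Mcoef_word_of (canon_rsc r w).
  rewrite /Fbar /Y; congr (if _ then _ else _); apply/idP/idP.
  + move/(Fbar_ch _ hx) => hF; apply/(Fbar_ch _ hx).
    exact: (Fch_inv hx (canon_rsc r w) hM1 hM2 hF).
  + move/(Fbar_ch _ hx) => hF; apply/(Fbar_ch _ hx).
    exact: (Fch_inv hx (canon_rsc r w) hM2 hM1 hF).
- rewrite /Fbar /Y /Defs.proper hp /= /lincomb big1 // => y _.
  by rewrite /M /Mcoef hp mulr0.
Qed.

Definition FS (g : ser n) := exists c, forall w, g w = lincomb (@Fbar n) Sall c w.

Lemma FS_ext (g g' : ser n) : FS g -> (forall w, g' w = g w) -> FS g'.
Proof. by case=> c hc H; exists c => w; rewrite H hc. Qed.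

Lemma FS_add (g g' : ser n) : FS g -> FS g' -> FS (fun w => g w + g' w).
Proof.
case=> c hc [c' hc']; exists (fun y => c y + c' y) => w.
rewrite hc hc' /lincomb -big_split /=; apply: eq_bigr => y _; by rewrite mulrDl.
Qed.

Lemma FS_sum (s : seq rsc) (d : rsc -> rat) (F : rsc -> ser n) :
  (forall y, y \in s -> d y != 0 -> FS (F y)) ->
  FS (fun w => \sum_(y <- s) d y * F y w).
Proof.
elim: s => [|y s IH] H.
  exists (fun _ => 0) => w; rewrite big_nil /lincomb big1 // => z _; by rewrite mul0r.
have IH' : FS (fun w => \sum_(y <- s) d y * F y w).
  by apply: IH => z hz; apply: H; rewrite inE hz orbT.
case: (eqVneq (d y) 0) => hd.
  apply: (FS_ext IH') => w; by rewrite big_cons hd mul0r add0r.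
have [c hc] := H y (mem_head _ _) hd.
apply: (FS_ext (FS_add (g := fun w => d y * F y w) _ IH')) => [|w]; last by rewrite big_cons.
exists (fun z => d y * c z) => w; rewrite hc /lincomb mulr_sumr.
by apply: eq_bigr => z _; rewrite mulrA.
Qed.

Lemma FS_M (x : rsc) : is_rsc r x -> FS (@M n x).
Proof.
pose N := #|{: 'I_n * 'I_n}|.
suff H : forall k x, is_rsc r x -> (N - Q x < k)%N -> FS (@M n x).
  by move=> hx; apply: (H (N - Q x).+1).
elim=> [//|k IH] {}x hx hk.
pose c := fun y => Fbar x (word_of y).
pose d := fun y => if y == x then 0 else c y.
have hcx : c x = 1 by exact: (Fbar_one hx (Mcoef_Fch hx (Mcoef_word_of hx))).
have key : forall w, @M n x w = Fbar x w + \sum_(y <- Sall) (- d y) * M y w.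
  move=> w; rewrite (Frep hx w) /lincomb -/c.
  have -> : \sum_(y <- Sall) c y * M y w =
            \sum_(y <- Sall) (d y * M y w + (if y == x then c y * M y w else 0)).
    apply: eq_bigr => y _; rewrite /d; case: eqP => [->|_]; by rewrite ?mul0r ?add0r ?addr0.
  have hs : \sum_(y <- Sall) (if y == x then c y * M y w else 0) = M x w.
    rewrite (@sum_single Sall _ x Sall_uniq) ?mem_Sall ?eqxx ?hcx ?mul1r //.
    by move=> y _ hne; rewrite (negbTE hne).
  rewrite big_split /= hs.
  have -> : \sum_(y <- Sall) - d y * M y w = - \sum_(y <- Sall) d y * M y w.
    by rewrite -sumrN; apply: eq_bigr => y _; rewrite mulNr.
  by rewrite addrAC subrr add0r.
apply: (FS_ext _ key); apply: FS_add.
  exists (fun y => if y == x then 1 else 0) => w.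
  rewrite /lincomb (@sum_single Sall _ x Sall_uniq) ?mem_Sall ?eqxx ?mul1r //.
  by move=> y _ /negbTE ->; rewrite mul0r.
apply: FS_sum => y hy; rewrite /d; case: (eqVneq y x) => [->|hne].
  by rewrite oppr_eq0 eqxx.
rewrite oppr_eq0 => hc.

have hy' : is_rsc r y by rewrite -mem_Sall.
have hF := Fbar_nz hx hc.
case: (tri hx hy' hF (Mcoef_word_of hy')) => [e|hlt]; first by move: hne; rewrite e eqxx.
apply: IH => //.
have hQ : (Q y <= N)%N by apply: max_card.
move: hQ hk hlt; clear; rewrite /N; move: #|_| => NN; lia.
Qed.


Lemma Find (s : seq rsc) (c : rsc -> rat) : uniq s -> all (is_rsc r) s ->
  (forall w, lincomb (@Fbar n) s c w = 0) -> forall x, x \in s -> c x = 0.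
Proof.
move=> hu hs H.
suff K : forall k x, x \in s -> (Q x < k)%N -> c x = 0.
  by move=> x hx; apply: (K (Q x).+1).
elim=> [//|k IH] x hxs hk.
have hx := allP hs x hxs.
have hM := Mcoef_word_of hx.
have := H (word_of x); rewrite /lincomb (@sum_single s _ x hu hxs).
  by rewrite (Fbar_one hx (Mcoef_Fch hx hM)) mulr1.
move=> y hy hne; case: (eqVneq (Fbar y (word_of x)) 0) => [->|hnz]; first by rewrite mulr0.
have hy' := allP hs y hy.
case: (tri hy' hx (Fbar_nz hy' hnz) hM) => [e|hlt]; first by move: hne; rewrite e eqxx.
by rewrite (IH y hy) ?mul0r //; apply: leq_trans hlt _.
Qed.

End Final.

Theorem mainTheorem4 (r n : nat) (hr : (0 < r)%N) :
  is_basis (@NCQSym n r) (@is_rsc n r) (@M n) /\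
  is_basis (@NCQSym n r) (@is_rsc n r) (@Fbar n).
Proof.
split; split.
- move=> x hx; exists [:: x], (fun _ => 1); split; first by rewrite /= hx.
  by move=> w; rewrite /lincomb big_seq1 mul1r.
- by [].
- move=> s c hu hs H x hxs; have hx := allP hs x hxs.
  by have := H (word_of x); rewrite (M_single c hu hs hx hxs (Mcoef_word_of hx)).
- move=> x hx; exists (Sall n r), (fun y => Fbar x (word_of y)); split.
    exact: all_Sall.
  exact: Frep.
- move=> g [s [c [hs hg]]].
  have : FS r g.
    apply: (FS_ext (FS_sum (s := s) (d := c) (F := @M n) _)) => [y hy _|w].
      by apply: FS_M; apply: (allP hs).
    by rewrite hg.
  case=> c' hc'; exists (Sall n r), c'; split => //; exact: all_Sall.
- exact: Find.
Qed.
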